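(* Let $n>m\geq 1$ be integers and $\gamma>0$, and write the Taylor expansion of the squared magnitude of Budak's function as $|G^{\gamma}_{mn}(j\omega)|^2=1+c_1\omega^2+c_2\omega^4+O(\omega^6)$. Then: (i) $c_1=0$ if and only if $$\gamma=\frac{(2n-1)\pm\sqrt{(2n-1)(2m-1)}}{2(n-m)},$$ and both of these values satisfy $\gamma>1/2$; for all other $\gamma>0$ the amplitude approximation is maximally flat of order $1$. (ii) There is no $\gamma>0$ with $c_1=c_2=0$; hence the amplitude approximation given by $G^{\gamma}_{mn}$ is never maximally flat of order greater than $2$, and order $2$ is attained exactly for the values of $\gamma$ in (i).
   Context: Generalized Bessel polynomials: $B_n(s,\alpha,\beta)=\sum_{k=0}^{n}\binom{n}{k}\frac{(n+k+\alpha-2)^{(k)}}{\beta^k}s^{n-k}$, with $(q)^{(k)}=q(q-1)\cdots(q-k+1)$, $(q)^{(0)}=1$. Budak's function is $G^{\gamma}_{mn}(s)=K\,\frac{B_m(2(\gamma-1)s,2,1)}{B_n(2\gamma s,2,1)}$ with $K=\frac{B_n(0,2,1)}{B_m(0,2,1)}$, so $G^{\gamma}_{mn}(0)=1$. An amplitude approximation of unit amplitude is maximally flat of order $k$ if, apart from the constant term $1$, the Taylor expansion of $|H(j\omega)|^2$ about $\omega=0$ begins with the term in $\omega^{2k}$. *)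

(* Defs.v *)
From Stdlib Require Import Reals Lra Lia.
Open Scope R_scope.

Definition Cx := (R * R)%type.
Definition cadd (z w : Cx) : Cx := (fst z + fst w, snd z + snd w).
Definition cmul (z w : Cx) : Cx :=
  (fst z * fst w - snd z * snd w, fst z * snd w + snd z * fst w).
Definition cscale (r : R) (z : Cx) : Cx := (r * fst z, r * snd z).
Fixpoint cpow (z : Cx) (n : nat) : Cx :=
  match n with O => (1, 0) | S n' => cmul z (cpow z n') end.
Definition cnorm2 (z : Cx) : R := fst z ^ 2 + snd z ^ 2.
Definition cinv (z : Cx) : Cx := (fst z / cnorm2 z, - snd z / cnorm2 z).
Definition cdiv (z w : Cx) : Cx := cmul z (cinv w).
Fixpoint csum (f : nat -> Cx) (N : nat) : Cx :=
  match N with O => f O | S N' => cadd (csum f N') (f N) end.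

Fixpoint ffall (q : R) (k : nat) : R :=
  match k with O => 1 | S k' => ffall q k' * (q - INR k') end.

(* coefficient of s^{n-k} in B_n(s, alpha, beta) *)
Definition bessel_coef (n k : nat) (alpha beta : R) : R :=
  C n k * ffall (INR (n + k) + alpha - 2) k / beta ^ k.

Definition besselR (n : nat) (s alpha beta : R) : R :=
  sum_f_R0 (fun k => bessel_coef n k alpha beta * s ^ (n - k)) n.

Definition besselC (n : nat) (s : Cx) (alpha beta : R) : Cx :=
  csum (fun k => cscale (bessel_coef n k alpha beta) (cpow s (n - k))) n.

Definition budakK (m n : nat) : R := besselR n 0 2 1 / besselR m 0 2 1.
Definition budakG (gamma : R) (m n : nat) (s : Cx) : Cx :=
  cscale (budakK m n)
    (cdiv (besselC m (cscale (2 * (gamma - 1)) s) 2 1)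
          (besselC n (cscale (2 * gamma) s) 2 1)).

Definition budak_magsq (gamma : R) (m n : nat) (omega : R) : R :=
  cnorm2 (budakG gamma m n (0, omega)).

Definition has_expansion (f : R -> R) (c : nat -> R) (N : nat) : Prop :=
  exists delta M : R, 0 < delta /\
    forall w : R, Rabs w < delta ->
      Rabs (f w - sum_f_R0 (fun i => c i * w ^ i) N) <= M * Rabs w ^ (S N).

Definition expansion_c1c2 (f : R -> R) (c1 c2 : R) : Prop :=
  has_expansion f
    (fun i => match i with 0%nat => 1 | 2%nat => c1 | 4%nat => c2 | _ => 0 end) 5.

Definition maximally_flat (f : R -> R) (k : nat) : Prop :=
  exists c : nat -> R,
    c 0%nat = 1 /\ (forall i, (0 < i < 2 * k)%nat -> c i = 0) /\
    c (2 * k)%nat <> 0 /\ has_expansion f c (2 * k).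

Definition gamma_plus (m n : nat) : R :=
  (INR (2 * n - 1) + sqrt (INR (2 * n - 1) * INR (2 * m - 1))) / (2 * INR (n - m)).
Definition gamma_minus (m n : nat) : R :=
  (INR (2 * n - 1) - sqrt (INR (2 * n - 1) * INR (2 * m - 1))) / (2 * INR (n - m)).

(* Main.v *)
Require Import Defs.
From Stdlib Require Import Reals Lra Lia.
Open Scope R_scope.

Lemma pow_le_dec (r : R) (j k : nat) : 0 <= r <= 1 -> (j <= k)%nat -> r ^ k <= r ^ j.
Proof.
  intros Hr Hjk. induction k as [|k IH].
  - assert (j = 0%nat) by lia. subst. lra.
  - destruct (Nat.eq_dec j (S k)) as [->|Hne]; [lra|].
    assert (Hj : (j <= k)%nat) by lia. specialize (IH Hj).
    simpl. assert (0 <= r ^ k) by (apply pow_le; lra). nra.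
Qed.

Definition Ok (k : nat) (h : R -> R) : Prop :=
  exists delta M, 0 < delta /\ forall x, Rabs x < delta -> Rabs (h x) <= M * Rabs x ^ k.
Definition Bd (h : R -> R) : Prop :=
  exists delta M, 0 < delta /\ forall x, Rabs x < delta -> Rabs (h x) <= M.

Lemma Ok_ext_near k h g : (exists d, 0 < d /\ forall x, Rabs x < d -> h x = g x) -> Ok k g -> Ok k h.
Proof.
  intros [d [Hd He]] [de [M [Hde H]]]. exists (Rmin d de), M. split.
  - apply Rmin_pos; auto.
  - intros x Hx. rewrite He. apply H. pose proof (Rmin_r d de); lra.
    pose proof (Rmin_l d de); lra.
Qed.

Lemma Ok_ext k h g : (forall x, h x = g x) -> Ok k g -> Ok k h.
Proof. intros He. apply Ok_ext_near. exists 1. split; [lra|auto]. Qed.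

Lemma Ok_plus k f g : Ok k f -> Ok k g -> Ok k (fun x => f x + g x).
Proof.
  intros [d1 [M1 [H1 F]]] [d2 [M2 [H2 G]]]. exists (Rmin d1 d2), (M1 + M2). split.
  - apply Rmin_pos; auto.
  - intros x Hx. pose proof (Rmin_r d1 d2); pose proof (Rmin_l d1 d2).
    specialize (F x ltac:(lra)). specialize (G x ltac:(lra)).
    eapply Rle_trans; [apply Rabs_triang|]. lra.
Qed.

Lemma Ok_scal k c f : Ok k f -> Ok k (fun x => c * f x).
Proof.
  intros [d [M [Hd F]]]. exists d, (Rabs c * M). split; auto.
  intros x Hx. rewrite Rabs_mult, Rmult_assoc. apply Rmult_le_compat_l; auto. apply Rabs_pos.
Qed.

Lemma Ok_minus k f g : Ok k f -> Ok k g -> Ok k (fun x => f x - g x).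
Proof.
  intros F G. apply (Ok_ext _ _ (fun x => f x + (-1) * g x)). intros; ring.
  apply Ok_plus; auto. apply Ok_scal; auto.
Qed.

Lemma Ok_mul_bd k f g : Ok k f -> Bd g -> Ok k (fun x => f x * g x).
Proof.
  intros [d1 [M1 [H1 F]]] [d2 [M2 [H2 G]]]. exists (Rmin d1 d2), (Rabs M1 * Rabs M2). split.
  - apply Rmin_pos; auto.
  - intros x Hx. pose proof (Rmin_r d1 d2); pose proof (Rmin_l d1 d2).
    specialize (F x ltac:(lra)). specialize (G x ltac:(lra)).
    rewrite Rabs_mult.
    assert (0 <= Rabs x ^ k) by (apply pow_le, Rabs_pos).
    pose proof (Rle_abs M1). pose proof (Rle_abs M2).
    pose proof (Rabs_pos (f x)). pose proof (Rabs_pos (g x)).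
    assert (Rabs (f x) <= Rabs M1 * Rabs x ^ k) by nra.
    assert (Rabs (g x) <= Rabs M2) by lra.
    nra.
Qed.

Lemma Ok_mono k j f : (j <= k)%nat -> Ok k f -> Ok j f.
Proof.
  intros Hjk [d [M [Hd F]]]. exists (Rmin d 1), (Rabs M). split.
  - apply Rmin_pos; lra.
  - intros x Hx. pose proof (Rmin_r d 1); pose proof (Rmin_l d 1).
    specialize (F x ltac:(lra)).
    assert (Hp : Rabs x ^ k <= Rabs x ^ j) by (apply pow_le_dec; auto; split; [apply Rabs_pos|lra]).
    assert (0 <= Rabs x ^ k) by (apply pow_le, Rabs_pos).
    pose proof (Rle_abs M). pose proof (Rabs_pos M). nra.
Qed.

Lemma Ok_bd k f : Ok k f -> Bd f.
Proof.
  intros H. apply (Ok_mono k 0) in H; [|lia]. destruct H as [d [M [Hd F]]].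
  exists d, M. split; auto. intros x Hx. specialize (F x Hx). simpl in F. lra.
Qed.

Lemma Ok_mon k j c : (k <= j)%nat -> Ok k (fun x => c * x ^ j).
Proof.
  intros Hkj. exists 1, (Rabs c). split; [lra|]. intros x Hx.
  rewrite Rabs_mult, <- RPow_abs. apply Rmult_le_compat_l; [apply Rabs_pos|].
  apply pow_le_dec; auto. split; [apply Rabs_pos|lra].
Qed.

Lemma Bd_const c : Bd (fun _ => c).
Proof. exists 1, (Rabs c). split; [lra|]. intros; lra. Qed.

Lemma Bd_plus f g : Bd f -> Bd g -> Bd (fun x => f x + g x).
Proof.
  intros [d1 [M1 [H1 F]]] [d2 [M2 [H2 G]]]. exists (Rmin d1 d2), (M1 + M2). split.
  - apply Rmin_pos; auto.
  - intros x Hx. pose proof (Rmin_r d1 d2); pose proof (Rmin_l d1 d2).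
    specialize (F x ltac:(lra)). specialize (G x ltac:(lra)).
    eapply Rle_trans; [apply Rabs_triang|]. lra.
Qed.

Lemma Bd_mon c j : Bd (fun x => c * x ^ j).
Proof. apply (Ok_bd 0), Ok_mon. lia. Qed.

Lemma Ok_scale k a f : Ok k f -> Ok k (fun x => f (a * x)).
Proof.
  intros [d [M [Hd F]]]. exists (d / (Rabs a + 1)), (M * Rabs a ^ k). split.
  - apply Rdiv_lt_0_compat; auto. pose proof (Rabs_pos a); lra.
  - intros x Hx. pose proof (Rabs_pos a).
    assert (Rabs (a * x) < d).
    { rewrite Rabs_mult. pose proof (Rabs_pos x).
      assert (Hx' : Rabs x * (Rabs a + 1) < d).
      { apply (Rmult_lt_compat_r (Rabs a + 1)) in Hx; [|lra].
        unfold Rdiv in Hx. rewrite Rmult_assoc, Rinv_l in Hx; lra. }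
      nra. }
    specialize (F _ H0). rewrite Rabs_mult, Rpow_mult_distr in F. lra.
Qed.
Open Scope R_scope.

Lemma Ok_poly6 c6 c8 c10 : Ok 6 (fun x => c6 * x^6 + c8 * x^8 + c10 * x^10).
Proof.
  apply Ok_plus; [apply Ok_plus|]; apply Ok_mon; lia.
Qed.

Lemma mag_lemma (Re Im : R -> R) p0 p2 p4 q1 q3 q5 :
  Ok 6 (fun x => Re x - (p0 + p2 * x^2 + p4 * x^4)) ->
  Ok 6 (fun x => Im x - (q1 * x + q3 * x^3 + q5 * x^5)) ->
  Ok 6 (fun x => Re x ^ 2 + Im x ^ 2 -
     (p0^2 + (2*p0*p2 + q1^2) * x^2 + (p2^2 + 2*p0*p4 + 2*q1*q3) * x^4)).
Proof.
  intros HR HI.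
  set (A := fun x => p0 + p2 * x^2 + p4 * x^4).
  set (I := fun x => q1 * x + q3 * x^3 + q5 * x^5).
  set (E1 := fun x => Re x - A x). set (E2 := fun x => Im x - I x).
  apply (Ok_ext _ _ (fun x => (E1 x * (2 * A x + E1 x) + E2 x * (2 * I x + E2 x)) +
      ((2*p2*p4 + 2*q1*q5 + q3^2) * x^6 + (p4^2 + 2*q3*q5) * x^8 + q5^2 * x^10))).
  { intros x. unfold E1, E2, A, I. ring. }
  apply Ok_plus; [|apply Ok_poly6].
  apply Ok_plus; apply Ok_mul_bd; auto.
  - apply Bd_plus. 2: exact (Ok_bd _ _ HR).
    apply (Ok_bd 0). apply (Ok_ext _ _ (fun x => (2*p0) * x^0 + (2*p2)*x^2 + (2*p4)*x^4)).
    intros; unfold A; simpl; ring. repeat apply Ok_plus; apply Ok_mon; lia.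
  - apply Bd_plus. 2: exact (Ok_bd _ _ HI).
    apply (Ok_bd 0). apply (Ok_ext _ _ (fun x => (2*q1) * x^1 + (2*q3)*x^3 + (2*q5)*x^5)).
    intros; unfold I; simpl; ring. repeat apply Ok_plus; apply Ok_mon; lia.
Qed.

Lemma D_near (D : R -> R) d0 : d0 <> 0 -> Ok 2 (fun x => D x - d0) ->
  exists d, 0 < d /\ forall x, Rabs x < d -> Rabs d0 / 2 <= Rabs (D x).
Proof.
  intros Hd0 [d [M [Hd F]]].
  assert (Ha : 0 < Rabs d0) by (apply Rabs_pos_lt; auto).
  set (e := Rmin d (Rmin 1 (Rabs d0 / (2 * (Rabs M + 1))))).
  assert (He : 0 < e).
  { unfold e. repeat apply Rmin_pos; try lra. apply Rdiv_lt_0_compat; [lra|].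
    pose proof (Rabs_pos M); lra. }
  exists e. split; auto. intros x Hx.
  assert (Hx1 : Rabs x < d) by (pose proof (Rmin_l d (Rmin 1 (Rabs d0 / (2 * (Rabs M + 1))))); unfold e in Hx; lra).
  assert (Hx2 : Rabs x < 1) by (pose proof (Rmin_r d (Rmin 1 (Rabs d0 / (2 * (Rabs M + 1))))); pose proof (Rmin_l 1 (Rabs d0 / (2 * (Rabs M + 1)))); unfold e in Hx; lra).
  assert (Hx3 : Rabs x < Rabs d0 / (2 * (Rabs M + 1))) by (pose proof (Rmin_r d (Rmin 1 (Rabs d0 / (2 * (Rabs M + 1))))); pose proof (Rmin_r 1 (Rabs d0 / (2 * (Rabs M + 1)))); unfold e in Hx; lra).
  specialize (F x Hx1).
  pose proof (Rabs_pos M). pose proof (Rle_abs M). pose proof (Rabs_pos x).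
  assert (Hx4 : Rabs x * (2 * (Rabs M + 1)) <= Rabs d0).
  { apply (Rmult_lt_compat_r (2 * (Rabs M + 1))) in Hx3; [|lra].
    unfold Rdiv in Hx3. rewrite Rmult_assoc, Rinv_l in Hx3; lra. }
  assert (M * Rabs x ^ 2 <= Rabs d0 / 2).
  { simpl. assert (Rabs x * (Rabs x * 1) <= Rabs x) by nra.
    assert (M * (Rabs x * (Rabs x * 1)) <= Rabs M * Rabs x) by nra. nra. }
  pose proof (Rabs_triang_inv d0 (d0 - D x)).
  replace (d0 - (d0 - D x)) with (D x) in H3 by ring.
  rewrite Rabs_minus_sym in H3. lra.
Qed.

Lemma rat_lemma (N D : R -> R) n0 n2 n4 d0 d2 d4 :
  d0 <> 0 ->
  Ok 6 (fun x => N x - (n0 + n2 * x^2 + n4 * x^4)) ->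
  Ok 6 (fun x => D x - (d0 + d2 * x^2 + d4 * x^4)) ->
  let q0 := n0 / d0 in let q2 := (n2 - q0 * d2) / d0 in
  let q4 := (n4 - q0 * d4 - q2 * d2) / d0 in
  Ok 6 (fun x => N x * / D x - (q0 + q2 * x^2 + q4 * x^4)).
Proof.
  intros Hd0 HN HD q0 q2 q4.
  assert (HD2 : Ok 2 (fun x => D x - d0)).
  { apply (Ok_ext _ _ (fun x => (D x - (d0 + d2 * x^2 + d4 * x^4)) + (d2 * x^2 + d4 * x^4))).
    intros; ring. apply Ok_plus. apply (Ok_mono 6); auto.
    apply Ok_plus; apply Ok_mon; lia. }
  destruct (D_near D d0 Hd0 HD2) as [e [He Hn]].
  assert (Ha : 0 < Rabs d0) by (apply Rabs_pos_lt; auto).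
  set (Q := fun x => q0 + q2 * x^2 + q4 * x^4).
  apply (Ok_ext_near _ _ (fun x => (N x - Q x * D x) * / D x)).
  { exists e. split; auto. intros x Hx. specialize (Hn x Hx).
    assert (D x <> 0). { intro Z. rewrite Z, Rabs_R0 in Hn. lra. }
    unfold Q. field. auto. }
  apply Ok_mul_bd.
  - apply (Ok_ext _ _ (fun x => (N x - (n0 + n2 * x^2 + n4 * x^4)) - Q x * (D x - (d0 + d2 * x^2 + d4 * x^4))
       + ((- (q2 * d4 + q4 * d2)) * x^6 + (- (q4 * d4)) * x^8 + 0 * x^10))).
    { intros x. unfold Q, q4, q2, q0. field. auto. }
    apply Ok_plus; [|apply Ok_poly6]. apply Ok_minus; auto.
    apply (Ok_ext _ _ (fun x => (D x - (d0 + d2 * x ^ 2 + d4 * x ^ 4)) * Q x)). intros; ring.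
    apply Ok_mul_bd; auto. unfold Q. apply (Ok_bd 0).
    apply (Ok_ext _ _ (fun x => q0 * x^0 + q2 * x^2 + q4 * x^4)). intros; simpl; ring.
    repeat apply Ok_plus; apply Ok_mon; lia.
  - exists e, (2 / Rabs d0). split; auto. intros x Hx. specialize (Hn x Hx).
    assert (D x <> 0). { intro Z. rewrite Z, Rabs_R0 in Hn. lra. }
    rewrite Rabs_inv. assert (0 < Rabs (D x)) by lra.
    apply (Rmult_le_reg_r (Rabs (D x))); auto. rewrite Rinv_l by lra.
    unfold Rdiv. apply (Rmult_le_reg_l (Rabs d0)); auto.
    replace (Rabs d0 * (2 * / Rabs d0 * Rabs (D x))) with (2 * Rabs (D x)) by (field; lra). lra.
Qed.

Fixpoint rs (j : nat) : R * R :=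
  match j with O => (1, 0) | S j' => (- snd (rs j'), fst (rs j')) end.

Lemma cpow_jx (y : R) (j : nat) : cpow (0, y) j = (y ^ j * fst (rs j), y ^ j * snd (rs j)).
Proof.
  induction j as [|j IH]; simpl. f_equal; ring.
  rewrite IH. unfold cmul; simpl. f_equal; ring.
Qed.

Lemma fst_csum f N : fst (csum f N) = sum_f_R0 (fun k => fst (f k)) N.
Proof. induction N; simpl; auto. rewrite IHN. reflexivity. Qed.
Lemma snd_csum f N : snd (csum f N) = sum_f_R0 (fun k => snd (f k)) N.
Proof. induction N; simpl; auto. rewrite IHN. reflexivity. Qed.

Lemma sum_rev (h : nat -> R) (m : nat) : sum_f_R0 (fun k => h (m - k)%nat) m = sum_f_R0 h m.
Proof.
  induction m as [|m IH]; [simpl; auto|].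
  rewrite (decomp_sum _ (S m)) by lia. simpl pred.
  rewrite Nat.sub_0_r.
  rewrite (sum_eq (fun i => h (S m - S i)%nat) (fun k => h (m - k)%nat)).
  2:{ intros i _. reflexivity. }
  rewrite IH. simpl. ring.
Qed.

Lemma sum_ext_zero (h : nat -> R) (m t : nat) : (forall j, (m < j)%nat -> h j = 0) ->
  sum_f_R0 h (m + t) = sum_f_R0 h m.
Proof.
  intros Hz. induction t as [|t IH]. rewrite Nat.add_0_r; auto.
  rewrite Nat.add_succ_r. simpl. rewrite IH, Hz by lia. ring.
Qed.

Lemma ffall_fact (a k : nat) : ffall (INR (a + k)) k = INR (Factorial.fact (a + k)) / INR (Factorial.fact a).
Proof.
  revert a. induction k as [|k IH]; intros a.
  - simpl. rewrite Nat.add_0_r. field. apply INR_fact_neq_0.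
  - simpl ffall. replace (a + S k)%nat with (S a + k)%nat by lia. rewrite IH.
    replace (S a + k)%nat with (S (a + k)) by lia.
    replace (INR (S (a + k)) - INR k) with (INR (S a)) by (rewrite !S_INR, plus_INR; ring).
    change (Factorial.fact (S a)) with (S a * Factorial.fact a)%nat.
    rewrite mult_INR. field. split; [apply INR_fact_neq_0|apply not_0_INR; lia].
Qed.

Lemma bc_closed (m k : nat) : (k <= m)%nat ->
  bessel_coef m k 2 1 = INR (Factorial.fact (m + k)) / (INR (Factorial.fact k) * INR (Factorial.fact (m - k))).
Proof.
  intros Hk. unfold bessel_coef, C.
  replace (INR (m + k) + 2 - 2) with (INR (m + k)) by ring.
  rewrite ffall_fact, pow1.
  field. repeat split; apply INR_fact_neq_0.
Qed.

Fixpoint beta (m j : nat) : R :=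
  match j with O => 1 | S j' => beta m j' * (INR m - INR j') / (INR (S j') * (2 * INR m - INR j')) end.

Lemma beta_zero m j : (m < j)%nat -> beta m j = 0.
Proof.
  induction j as [|j IH]; intros H; [lia|]. simpl beta.
  destruct (Nat.eq_dec m j) as [->|Hne].
  - replace (INR j - INR j) with 0 by ring. unfold Rdiv. ring.
  - rewrite IH by lia. unfold Rdiv; ring.
Qed.

Lemma bc_beta m j : (j <= m)%nat -> bessel_coef m (m - j) 2 1 = bessel_coef m m 2 1 * beta m j.
Proof.
  induction j as [|j IH]; intros Hj.
  - simpl. rewrite Nat.sub_0_r. ring.
  - cbn [beta]. unfold Rdiv; rewrite <- Rmult_assoc, <- Rmult_assoc, <- IH by lia.
    rewrite !bc_closed by lia.
    set (k := (m - S j)%nat).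
    replace (m - (m - S j))%nat with (S j) by lia.
    replace (m - j)%nat with (S k) by (unfold k; lia).
    replace (m - S k)%nat with j by (unfold k; lia).
    replace (m - k)%nat with (S j) by (unfold k; lia).
    change (Factorial.fact (S j)) with (S j * Factorial.fact j)%nat.
    replace (m + S k)%nat with (S (m + k)) by lia.
    change (Factorial.fact (S (m + k))) with (S (m + k) * Factorial.fact (m + k))%nat.
    change (Factorial.fact (S k)) with (S k * Factorial.fact k)%nat.
    change (Factorial.fact (S j)) with (S j * Factorial.fact j)%nat.
    rewrite !mult_INR.
    assert (Hkm : INR m - INR j = INR (S k)) by (unfold k; rewrite <- minus_INR by lia; f_equal; lia).
    assert (H2 : 2 * INR m - INR j = INR (S (m + k))) by (rewrite S_INR, plus_INR; unfold k; rewrite minus_INR by lia; rewrite S_INR; ring).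
    rewrite Hkm, H2.
    pose proof (INR_fact_neq_0 j). pose proof (INR_fact_neq_0 k). pose proof (INR_fact_neq_0 (m+k)).
    assert (INR (S j) <> 0) by (apply not_0_INR; lia).
    assert (INR (S k) <> 0) by (apply not_0_INR; lia).
    assert (INR (S (m+k)) <> 0) by (apply not_0_INR; lia).
    field. tauto.
Qed.

Lemma tail6 (h : nat -> R) (t : nat) :
  Ok 6 (fun y => sum_f_R0 (fun j => h j * y ^ j) (5 + t) - sum_f_R0 (fun j => h j * y ^ j) 5).
Proof.
  induction t as [|t IH].
  - apply (Ok_ext _ _ (fun y => 0 * y ^ 6)). intros; rewrite Nat.add_0_r; ring. apply Ok_mon; lia.
  - rewrite Nat.add_succ_r.
    apply (Ok_ext _ _ (fun y => (sum_f_R0 (fun j => h j * y ^ j) (5 + t) - sum_f_R0 (fun j => h j * y ^ j) 5) + h (S (5 + t)) * y ^ (S (5 + t)))).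
    intros; simpl; ring.
    apply Ok_plus; auto. apply Ok_mon; lia.
Qed.

Lemma bessel_parts (m : nat) (y : R) :
  fst (besselC m (0, y) 2 1) = sum_f_R0 (fun j => (bessel_coef m m 2 1 * beta m j * fst (rs j)) * y ^ j) (5 + m) /\
  snd (besselC m (0, y) 2 1) = sum_f_R0 (fun j => (bessel_coef m m 2 1 * beta m j * snd (rs j)) * y ^ j) (5 + m).
Proof.
  unfold besselC. rewrite fst_csum, snd_csum. rewrite Nat.add_comm.
  split; (rewrite sum_ext_zero; [|intros j Hj; rewrite beta_zero by lia; ring]);
  rewrite <- sum_rev; apply sum_eq; intros k Hk; unfold cscale; simpl fst; simpl snd;
  rewrite cpow_jx; simpl;
  rewrite <- bc_beta by lia; replace (m - (m - k))%nat with k by lia; ring.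
Qed.

Definition e1 m := beta m 1 ^ 2 - 2 * beta m 2.
Definition e2 m := beta m 2 ^ 2 + 2 * beta m 4 - 2 * beta m 1 * beta m 3.

Lemma bessel_mag (m : nat) (a : R) :
  let b0 := bessel_coef m m 2 1 in
  Ok 6 (fun x => cnorm2 (besselC m (0, a * x) 2 1) -
     (b0 ^ 2 + b0 ^ 2 * a ^ 2 * e1 m * x ^ 2 + b0 ^ 2 * a ^ 4 * e2 m * x ^ 4)).
Proof.
  intros b0.
  set (Re := fun y => fst (besselC m (0, y) 2 1)).
  set (Im := fun y => snd (besselC m (0, y) 2 1)).
  assert (HR : Ok 6 (fun y => Re y - (b0 + (- b0 * beta m 2) * y^2 + (b0 * beta m 4) * y^4))).
  { apply (Ok_ext _ _ (fun y => sum_f_R0 (fun j => (b0 * beta m j * fst (rs j)) * y ^ j) (5 + m) - sum_f_R0 (fun j => (b0 * beta m j * fst (rs j)) * y ^ j) 5)).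
    intros y. unfold Re. rewrite (proj1 (bessel_parts m y)). set (F := sum_f_R0 _ (5 + m)). cbn [sum_f_R0 rs fst snd pow beta]. ring.
    apply tail6. }
  assert (HI : Ok 6 (fun y => Im y - ((b0 * beta m 1) * y + (- b0 * beta m 3) * y^3 + (b0 * beta m 5) * y^5))).
  { apply (Ok_ext _ _ (fun y => sum_f_R0 (fun j => (b0 * beta m j * snd (rs j)) * y ^ j) (5 + m) - sum_f_R0 (fun j => (b0 * beta m j * snd (rs j)) * y ^ j) 5)).
    intros y. unfold Im. rewrite (proj2 (bessel_parts m y)). set (F := sum_f_R0 _ (5 + m)). cbn [sum_f_R0 rs fst snd pow beta]. ring.
    apply tail6. }
  apply (Ok_scale _ a) in HR. apply (Ok_scale _ a) in HI.
  pose proof (mag_lemma (fun x => Re (a * x)) (fun x => Im (a * x)) b0 (- b0 * beta m 2 * a^2) (b0 * beta m 4 * a^4)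
      (b0 * beta m 1 * a) (- b0 * beta m 3 * a^3) (b0 * beta m 5 * a^5)) as H.
  refine (Ok_ext _ _ _ _ (H _ _)).
  - intros x. unfold cnorm2, Re, Im, e1, e2. cbn [beta]. ring.
  - refine (Ok_ext _ _ _ _ HR). intros; ring.
  - refine (Ok_ext _ _ _ _ HI). intros; ring.
Qed.

Lemma budak_identity g m n w :
  budak_magsq g m n w = budakK m n ^ 2 *
    (cnorm2 (besselC m (0, 2 * (g - 1) * w) 2 1) * / cnorm2 (besselC n (0, 2 * g * w) 2 1)).
Proof.
  unfold budak_magsq, budakG.
  replace (cscale (2 * (g - 1)) (0, w)) with (0, 2 * (g - 1) * w) by (unfold cscale; simpl; f_equal; ring).
  replace (cscale (2 * g) (0, w)) with (0, 2 * g * w) by (unfold cscale; simpl; f_equal; ring).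
  destruct (besselC m (0, 2 * (g - 1) * w) 2 1) as [p1 p2].
  destruct (besselC n (0, 2 * g * w) 2 1) as [q1 q2].
  unfold cnorm2, cscale, cdiv, cmul, cinv, cnorm2; cbn [fst snd].
  destruct (Req_dec (q1 ^ 2 + q2 ^ 2) 0) as [Z|Z].
  - assert (q1 = 0) by nra. assert (q2 = 0) by nra. rewrite Z. subst.
    unfold Rdiv. rewrite Rinv_0. ring.
  - field. auto.
Qed.

Lemma besselR0 n : besselR n 0 2 1 = bessel_coef n n 2 1.
Proof.
  unfold besselR. destruct n as [|n].
  - simpl. ring.
  - match goal with |- sum_f_R0 ?f (S n) = _ => change (sum_f_R0 f (S n)) with (sum_f_R0 f n + f (S n)) end. rewrite sum_eq_R0.
    + rewrite Nat.sub_diag. simpl. ring.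
    + intros k Hk. rewrite pow_i by lia. ring.
Qed.

Lemma b0_pos m : 0 < bessel_coef m m 2 1.
Proof.
  rewrite bc_closed by lia. apply Rdiv_lt_0_compat.
  apply lt_0_INR, Factorial.lt_O_fact.
  apply Rmult_lt_0_compat; apply lt_0_INR, Factorial.lt_O_fact.
Qed.

Definition C1 g m n := (2 * (g - 1)) ^ 2 * e1 m - (2 * g) ^ 2 * e1 n.
Definition C2 g m n := (2 * (g - 1)) ^ 4 * e2 m - (2 * g) ^ 4 * e2 n - C1 g m n * (2 * g) ^ 2 * e1 n.

Lemma EXP g m n : Ok 6 (fun w => budak_magsq g m n w - (1 + C1 g m n * w ^ 2 + C2 g m n * w ^ 4)).
Proof.
  set (a := 2 * (g - 1)). set (b := 2 * g).
  set (bm := bessel_coef m m 2 1). set (bn := bessel_coef n n 2 1).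
  assert (Hbm : bm <> 0) by (pose proof (b0_pos m); unfold bm; lra).
  assert (Hbn : bn <> 0) by (pose proof (b0_pos n); unfold bn; lra).
  assert (Hd0 : bn ^ 2 <> 0) by (apply pow_nonzero; auto).
  pose proof (rat_lemma (fun x => cnorm2 (besselC m (0, a * x) 2 1)) (fun x => cnorm2 (besselC n (0, b * x) 2 1))
     (bm ^ 2) (bm ^ 2 * a ^ 2 * e1 m) (bm ^ 2 * a ^ 4 * e2 m)
     (bn ^ 2) (bn ^ 2 * b ^ 2 * e1 n) (bn ^ 2 * b ^ 4 * e2 n) Hd0 (bessel_mag m a) (bessel_mag n b)) as H.
  simpl in H.
  apply (Ok_scal _ ((bn / bm) ^ 2)) in H.
  refine (Ok_ext _ _ _ _ H).
  intros w. rewrite budak_identity. unfold budakK. rewrite !besselR0. fold bm bn.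
  unfold C2, C1. fold a b. set (X := cnorm2 (besselC m (0, a * w) 2 1) * / cnorm2 (besselC n (0, b * w) 2 1)). field. auto.
Qed.

Lemma sumS (f : nat -> R) k : sum_f_R0 f (S k) = sum_f_R0 f k + f (S k).
Proof. reflexivity. Qed.

Lemma sum_abs_nonneg (c : nat -> R) N : 0 <= sum_f_R0 (fun i => Rabs (c i)) N.
Proof. apply cond_pos_sum. intros; apply Rabs_pos. Qed.

Lemma tail_bound (c : nat -> R) (w : R) (L t : nat) : Rabs w <= 1 ->
  Rabs (sum_f_R0 (fun i => c i * w ^ i) (L + t) - sum_f_R0 (fun i => c i * w ^ i) L)
   <= sum_f_R0 (fun i => Rabs (c i)) (L + t) * Rabs w ^ (S L).
Proof.
  intros Hw. induction t as [|t IH].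
  - rewrite Nat.add_0_r. replace (sum_f_R0 (fun i => c i * w ^ i) L - sum_f_R0 (fun i => c i * w ^ i) L) with 0 by ring.
    rewrite Rabs_R0. apply Rmult_le_pos. apply sum_abs_nonneg. apply pow_le, Rabs_pos.
  - rewrite Nat.add_succ_r. rewrite !sumS.
    replace (sum_f_R0 (fun i => c i * w ^ i) (L + t) + c (S (L + t)) * w ^ S (L + t) - sum_f_R0 (fun i => c i * w ^ i) L)
      with ((sum_f_R0 (fun i => c i * w ^ i) (L + t) - sum_f_R0 (fun i => c i * w ^ i) L) + c (S (L + t)) * w ^ S (L + t)) by ring.
    eapply Rle_trans; [apply Rabs_triang|].
    rewrite Rabs_mult, <- RPow_abs.
    assert (Rabs w ^ S (L + t) <= Rabs w ^ S L) by (apply pow_le_dec; [split; [apply Rabs_pos|lra]|lia]).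
    assert (0 <= Rabs w ^ S (L + t)) by (apply pow_le, Rabs_pos).
    pose proof (Rabs_pos (c (S (L + t)))). nra.
Qed.

Lemma trunc (f : R -> R) (c c' : nat -> R) (N L : nat) : has_expansion f c N -> (L <= N)%nat ->
  (forall i, (i <= L)%nat -> c' i = c i) -> has_expansion f c' L.
Proof.
  intros [d [M [Hd F]]] HLN Hc.
  set (S0 := sum_f_R0 (fun i => Rabs (c i)) N).
  exists (Rmin d 1), (Rabs M + S0). split; [apply Rmin_pos; lra|].
  intros w Hw. pose proof (Rmin_l d 1). pose proof (Rmin_r d 1).
  specialize (F w ltac:(lra)).
  rewrite (sum_eq (fun i => c' i * w ^ i) (fun i => c i * w ^ i)) by (intros i Hi; rewrite Hc; auto).
  pose proof (tail_bound c w L (N - L) ltac:(lra)) as T. replace (L + (N - L))%nat with N in T by lia.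
  replace (f w - sum_f_R0 (fun i => c i * w ^ i) L) with
    ((f w - sum_f_R0 (fun i => c i * w ^ i) N) + (sum_f_R0 (fun i => c i * w ^ i) N - sum_f_R0 (fun i => c i * w ^ i) L)) by ring.
  eapply Rle_trans; [apply Rabs_triang|].
  assert (Rabs w ^ S N <= Rabs w ^ S L) by (apply pow_le_dec; [split; [apply Rabs_pos|lra]|lia]).
  assert (0 <= Rabs w ^ S N) by (apply pow_le, Rabs_pos).
  pose proof (Rle_abs M). pose proof (Rabs_pos M). fold S0 in T. pose proof (sum_abs_nonneg c N).
  nra.
Qed.

Lemma small_zero (a K d : R) : 0 < d -> (forall w, 0 < Rabs w < d -> Rabs a <= K * Rabs w) -> a = 0.
Proof.
  intros Hd H. destruct (Req_dec a 0) as [|Ha]; auto. exfalso.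
  assert (Hpa : 0 < Rabs a) by (apply Rabs_pos_lt; auto).
  pose proof (Rabs_pos K). pose proof (Rle_abs K).
  set (w := Rmin (d / 2) (Rabs a / (2 * (Rabs K + 1)))).
  assert (Hw : 0 < w) by (unfold w; apply Rmin_pos; apply Rdiv_lt_0_compat; lra).
  assert (Hw1 : w <= d / 2) by apply Rmin_l.
  assert (Hw2 : w <= Rabs a / (2 * (Rabs K + 1))) by apply Rmin_r.
  assert (Hw3 : w * (2 * (Rabs K + 1)) <= Rabs a).
  { apply (Rmult_le_compat_r (2 * (Rabs K + 1))) in Hw2; [|lra].
    unfold Rdiv in Hw2. rewrite Rmult_assoc, Rinv_l in Hw2; lra. }
  specialize (H w). rewrite Rabs_pos_eq in H by lra. specialize (H ltac:(lra)). nra.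
Qed.

Lemma poly_bound (e : nat -> R) (w : R) L : Rabs w <= 1 ->
  Rabs (sum_f_R0 (fun i => e i * w ^ i) L) <= sum_f_R0 (fun i => Rabs (e i)) L.
Proof.
  intros Hw. induction L as [|L IH].
  - simpl. rewrite Rmult_1_r. lra.
  - rewrite !sumS. eapply Rle_trans; [apply Rabs_triang|]. rewrite Rabs_mult, <- RPow_abs.
    assert (Rabs w ^ S L <= Rabs w ^ 0) by (apply pow_le_dec; [split; [apply Rabs_pos|lra]|lia]).
    simpl pow in H at 2. pose proof (Rabs_pos (e (S L))). nra.
Qed.

Lemma poly_zero (L : nat) : forall (e : nat -> R) (d M : R), 0 < d ->
  (forall w, 0 < Rabs w < d -> Rabs (sum_f_R0 (fun i => e i * w ^ i) L) <= M * Rabs w ^ (S L)) ->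
  forall i, (i <= L)%nat -> e i = 0.
Proof.
  induction L as [|L IH]; intros e d M Hd H.
  - intros i Hi. assert (i = 0%nat) by lia. subst.
    apply (small_zero _ M d Hd). intros w Hw. specialize (H w Hw). simpl in H.
    rewrite Rmult_1_r, Rmult_1_r in H. exact H.
  - set (q := fun w => sum_f_R0 (fun i => e (S i) * w ^ i) L).
    assert (Hsplit : forall w, sum_f_R0 (fun i => e i * w ^ i) (S L) = e 0%nat + w * q w).
    { intros w. rewrite decomp_sum by lia. simpl pred. unfold q. rewrite scal_sum. simpl pow at 1.
      f_equal. ring. apply sum_eq. intros; simpl; ring. }
    set (Q := sum_f_R0 (fun i => Rabs (e (S i))) L).
    assert (He0 : e 0%nat = 0).
    { apply (small_zero _ (Rabs M + Q) (Rmin d 1)). apply Rmin_pos; lra.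
      intros w Hw. pose proof (Rmin_l d 1). pose proof (Rmin_r d 1).
      specialize (H w ltac:(lra)). rewrite Hsplit in H.
      assert (Hq : Rabs (q w) <= Q) by (apply poly_bound; lra).
      assert (Hp : Rabs w ^ S (S L) <= Rabs w ^ 1) by (apply pow_le_dec; [split; [apply Rabs_pos|lra]|lia]).
      rewrite pow_1 in Hp.
      pose proof (Rabs_triang (e 0%nat + w * q w) (- (w * q w))) as Ht.
      replace (e 0%nat + w * q w + - (w * q w)) with (e 0%nat) in Ht by ring.
      rewrite Rabs_Ropp, Rabs_mult in Ht.
      assert (0 <= Rabs w ^ S (S L)) by (apply pow_le, Rabs_pos).
      pose proof (Rle_abs M). pose proof (Rabs_pos M). pose proof (Rabs_pos (q w)).
      assert (Rabs w * Rabs (q w) <= Rabs w * Q) by (apply Rmult_le_compat_l; lra).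
      assert (M * Rabs w ^ S (S L) <= Rabs M * Rabs w ^ S (S L)) by (apply Rmult_le_compat_r; lra).
      assert (Rabs M * Rabs w ^ S (S L) <= Rabs M * Rabs w) by (apply Rmult_le_compat_l; lra).
      rewrite Rmult_plus_distr_r. lra. }
    assert (Hq : forall i, (i <= L)%nat -> e (S i) = 0).
    { apply (IH (fun i => e (S i)) d M Hd). intros w Hw. specialize (H w Hw).
      rewrite Hsplit, He0, Rplus_0_l, Rabs_mult in H. fold (q w).
      replace (M * Rabs w ^ S (S L)) with (Rabs w * (M * Rabs w ^ S L)) in H by (simpl; ring).
      apply Rmult_le_reg_l in H; lra. }
    intros i Hi. destruct i; auto. apply Hq. lia.
Qed.

Lemma uniq_exp (f : R -> R) (c c' : nat -> R) (N N' : nat) :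
  has_expansion f c N -> has_expansion f c' N' ->
  forall i, (i <= N)%nat -> (i <= N')%nat -> c i = c' i.
Proof.
  intros H1 H2 i Hi Hi'.
  set (L := Nat.min N N').
  apply (trunc f c c N L) in H1; [|unfold L; lia|auto].
  apply (trunc f c' c' N' L) in H2; [|unfold L; lia|auto].
  destruct H1 as [d1 [M1 [Hd1 F1]]]. destruct H2 as [d2 [M2 [Hd2 F2]]].
  assert (Z : c i - c' i = 0).
  { apply (poly_zero L (fun i => c i - c' i) (Rmin d1 d2) (M1 + M2)). apply Rmin_pos; auto.
    2: unfold L; lia.
    intros w Hw. pose proof (Rmin_l d1 d2). pose proof (Rmin_r d1 d2).
    specialize (F1 w ltac:(lra)). specialize (F2 w ltac:(lra)).
    rewrite (sum_eq _ (fun i => c i * w ^ i - c' i * w ^ i)) by (intros; ring).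
    rewrite minus_sum.
    replace (sum_f_R0 (fun i => c i * w ^ i) L - sum_f_R0 (fun i => c' i * w ^ i) L)
      with ((f w - sum_f_R0 (fun i => c' i * w ^ i) L) - (f w - sum_f_R0 (fun i => c i * w ^ i) L)) by ring.
    eapply Rle_trans; [apply Rabs_triang|]. rewrite Rabs_Ropp. lra. }
  lra.
Qed.

Definition cstar g m n (i : nat) : R :=
  match i with 0%nat => 1 | 2%nat => C1 g m n | 4%nat => C2 g m n | _ => 0 end.

Lemma EXP2 g m n : has_expansion (budak_magsq g m n) (cstar g m n) 5.
Proof.
  destruct (EXP g m n) as [d [M [Hd F]]]. exists d, M. split; auto.
  intros w Hw. specialize (F w Hw). cbn [sum_f_R0 cstar].
  replace (1 * w ^ 0 + 0 * w ^ 1 + C1 g m n * w ^ 2 + 0 * w ^ 3 + C2 g m n * w ^ 4 + 0 * w ^ 5)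
    with (1 + C1 g m n * w ^ 2 + C2 g m n * w ^ 4) by (simpl; ring). exact F.
Qed.


Lemma INR_ge1 m : (1 <= m)%nat -> 1 <= INR m.
Proof. intros H. apply le_INR in H. simpl in H. exact H. Qed.

Lemma e1_val m : (1 <= m)%nat -> e1 m = / (4 * (2 * INR m - 1)).
Proof.
  intros Hm. pose proof (INR_ge1 m Hm). unfold e1. cbn [beta]. simpl INR.
  field. lra.
Qed.

Lemma e2_val m : (2 <= m)%nat -> e2 m = (INR m - 1) / (16 * (2 * INR m - 1) ^ 2 * (2 * INR m - 3)).
Proof.
  intros Hm. assert (2 <= INR m) by (apply le_INR in Hm; simpl in Hm; lra).
  unfold e2. cbn [beta]. simpl INR.
  field. lra.
Qed.

Lemma e2_one : e2 1 = 0.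
Proof. unfold e2. rewrite (beta_zero 1 2), (beta_zero 1 3), (beta_zero 1 4) by lia. ring. Qed.

Lemma INR_2m1 n : (1 <= n)%nat -> INR (2 * n - 1) = 2 * INR n - 1.
Proof. intros H. rewrite minus_INR by lia. rewrite mult_INR. simpl. ring. Qed.

Lemma gamma_facts m n : (1 <= m)%nat -> (m < n)%nat ->
  let P := 2 * INR n - 1 in let Q := 2 * INR m - 1 in let s := sqrt (P * Q) in
  gamma_plus m n = (P + s) / (P - Q) /\ gamma_minus m n = (P - s) / (P - Q) /\
  1 <= Q /\ Q + 2 <= P /\ 0 <= s /\ s * s = P * Q.
Proof.
  intros Hm Hmn P Q s.
  pose proof (INR_ge1 m Hm). assert (INR m + 1 <= INR n) by (apply le_INR in Hmn; rewrite S_INR in Hmn; lra).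
  unfold gamma_plus, gamma_minus. rewrite !INR_2m1 by lia. rewrite minus_INR by lia.
  fold P Q. fold s.
  replace (2 * (INR n - INR m)) with (P - Q) by (unfold P, Q; ring).
  repeat split; try reflexivity; try (unfold P, Q; lra).
  apply sqrt_pos. apply sqrt_sqrt. unfold P, Q. nra.
Qed.

Lemma gammas_gt m n : (1 <= m)%nat -> (m < n)%nat -> / 2 < gamma_plus m n /\ / 2 < gamma_minus m n.
Proof.
  intros Hm Hmn. destruct (gamma_facts m n Hm Hmn) as [Hp [Hmi [HQ [HP [Hs Hss]]]]].
  rewrite Hp, Hmi.
  set (P := 2 * INR n - 1) in *. set (Q := 2 * INR m - 1) in *. set (s := sqrt (P * Q)) in *.
  assert (s < (P + Q) / 2) by nra.
  split; apply (Rmult_lt_reg_r (P - Q)); try lra; unfold Rdiv; rewrite Rmult_assoc, Rinv_l by lra; lra.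
Qed.

Lemma C1_roots g m n : (1 <= m)%nat -> (m < n)%nat ->
  (C1 g m n = 0 <-> (g = gamma_plus m n \/ g = gamma_minus m n)).
Proof.
  intros Hm Hmn. destruct (gamma_facts m n Hm Hmn) as [Hp [Hmi [HQ [HP [Hs Hss]]]]].
  unfold C1. rewrite !e1_val by lia. rewrite Hp, Hmi.
  set (P := 2 * INR n - 1) in *. set (Q := 2 * INR m - 1) in *. set (s := sqrt (P * Q)) in *.
  assert (Key : (2 * (g - 1)) ^ 2 * / (4 * Q) - (2 * g) ^ 2 * / (4 * P) =
     (P - Q) / (P * Q) * ((g - (P + s) / (P - Q)) * (g - (P - s) / (P - Q)))).
  { field_simplify; try lra. replace (s ^ 2) with (P * Q) by (rewrite <- Hss; ring). field. split; [|split]; try lra. intro Z. assert (Q * P * (P - Q) = 0) by (rewrite <- Z; ring). nra. }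
  rewrite Key. split.
  - intros Z. apply Rmult_integral in Z. destruct Z as [Z|Z].
    + exfalso. unfold Rdiv in Z. apply Rmult_integral in Z. destruct Z as [Z|Z]; [lra|].
      apply Rinv_neq_0_compat in Z; auto. nra.
    + apply Rmult_integral in Z. destruct Z; [left|right]; lra.
  - intros [->| ->]; ring.
Qed.

Lemma not_both g m n : (1 <= m)%nat -> (m < n)%nat -> 0 < g -> ~ (C1 g m n = 0 /\ C2 g m n = 0).
Proof.
  intros Hm Hmn Hg [Z1 Z2].
  assert (E : (2 * (g - 1)) ^ 4 * e2 m = (2 * g) ^ 4 * e2 n).
  { unfold C2 in Z2. rewrite Z1 in Z2. lra. }
  unfold C1 in Z1. rewrite !e1_val in Z1 by lia.
  assert (HN : 2 <= INR n) by (apply le_INR in Hmn; rewrite S_INR in Hmn; pose proof (INR_ge1 m Hm); lra).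
  assert (HM : 1 <= INR m) by (apply INR_ge1; auto).
  assert (HNM : INR m + 1 <= INR n) by (apply le_INR in Hmn; rewrite S_INR in Hmn; lra).
  assert (En : e2 n * (16 * (2 * INR n - 1) ^ 2 * (2 * INR n - 3)) = INR n - 1).
  { rewrite e2_val by lia. field. lra. }
  set (A := (2 * (g - 1)) ^ 2) in *. set (B := (2 * g) ^ 2) in *.
  assert (HB : 0 < B) by (unfold B; nra).
  set (P := 2 * INR n - 1) in *. set (Q := 2 * INR m - 1) in *.
  assert (HQ1 : 1 <= Q) by (unfold Q; lra). assert (HP1 : 1 <= P) by (unfold P; lra).
  assert (HAB : A * P = B * Q).
  { assert (H0 : A * / (4 * Q) = B * / (4 * P)) by lra.
    replace (A * P) with (A * / (4 * Q) * (4 * P * Q)) by (field; lra).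
    rewrite H0. field. lra. }
  replace ((2 * (g - 1)) ^ 4) with (A ^ 2) in E by (unfold A; ring).
  replace ((2 * g) ^ 4) with (B ^ 2) in E by (unfold B; ring).
  destruct (Nat.eq_dec m 1) as [->|Hm2].
  - rewrite e2_one in E.
    assert (HP2 : 0 < 16 * P ^ 2 * (2 * INR n - 3)).
    { repeat apply Rmult_lt_0_compat; try lra; apply pow_lt; lra. }
    assert (B ^ 2 * e2 n = 0) by lra.
    assert (e2 n = 0). { apply Rmult_integral in H. destruct H; auto. exfalso. assert (0 < B ^ 2) by (apply pow_lt; lra). lra. }
    rewrite H0 in En. lra.
  - assert (HM2 : 2 <= INR m) by (assert (2 <= m)%nat by lia; apply le_INR in H; simpl in H; lra).
    assert (Em : e2 m * (16 * Q ^ 2 * (2 * INR m - 3)) = INR m - 1).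
    { rewrite e2_val by lia. unfold Q. field. lra. }
    assert (E2 : A ^ 2 * (INR m - 1) * P ^ 2 * (2 * INR n - 3) = B ^ 2 * (INR n - 1) * Q ^ 2 * (2 * INR m - 3)).
    { rewrite <- Em, <- En.
      transitivity ((A ^ 2 * e2 m) * (16 * Q ^ 2 * (2 * INR m - 3) * P ^ 2 * (2 * INR n - 3))). ring.
      rewrite E. ring. }
    assert (A ^ 2 * P ^ 2 = B ^ 2 * Q ^ 2) by (rewrite <- !Rpow_mult_distr, HAB; reflexivity).
    assert (B ^ 2 * Q ^ 2 * (INR n - INR m) = 0).
    { replace (B ^ 2 * Q ^ 2 * (INR n - INR m)) with
        (B ^ 2 * Q ^ 2 * ((INR m - 1) * (2 * INR n - 3)) - B ^ 2 * Q ^ 2 * ((INR n - 1) * (2 * INR m - 3))) by (unfold Q; ring).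
      replace (B ^ 2 * Q ^ 2 * ((INR m - 1) * (2 * INR n - 3))) with (A ^ 2 * (INR m - 1) * P ^ 2 * (2 * INR n - 3)) by (transitivity (A ^ 2 * P ^ 2 * ((INR m - 1) * (2 * INR n - 3))); [ring|rewrite H; ring]). rewrite E2. ring. }
    assert (0 < B ^ 2 * Q ^ 2 * (INR n - INR m)).
    { apply Rmult_lt_0_compat; [apply Rmult_lt_0_compat|]; try lra; apply pow_lt; lra. }
    lra.
Qed.

Theorem mainTheorem7 (m n : nat) (Hm : (1 <= m)%nat) (Hmn : (m < n)%nat) :
  (/ 2 < gamma_plus m n /\ / 2 < gamma_minus m n) /\
  forall gamma : R, 0 < gamma ->
    let f := budak_magsq gamma m n in
    (exists c1 c2 : R, expansion_c1c2 f c1 c2) /\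
    (forall c1 c2 : R, expansion_c1c2 f c1 c2 ->
       (c1 = 0 <-> (gamma = gamma_plus m n \/ gamma = gamma_minus m n)) /\
       ~ (c1 = 0 /\ c2 = 0)) /\
    (~ (gamma = gamma_plus m n \/ gamma = gamma_minus m n) -> maximally_flat f 1) /\
    (forall k : nat, (2 < k)%nat -> ~ maximally_flat f k) /\
    (maximally_flat f 2 <-> (gamma = gamma_plus m n \/ gamma = gamma_minus m n)).
Proof.
  split; [apply gammas_gt; auto|].
  intros g Hg f.
  pose proof (EXP2 g m n) as Hexp. fold f in Hexp.
  pose proof (C1_roots g m n Hm Hmn) as Hroots.
  pose proof (not_both g m n Hm Hmn Hg) as Hnb.
  assert (Hc : forall c1 c2, expansion_c1c2 f c1 c2 -> c1 = C1 g m n /\ c2 = C2 g m n).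
  { intros c1 c2 H. unfold expansion_c1c2 in H. split.
    - exact (uniq_exp f _ _ 5 5 H Hexp 2 ltac:(lia) ltac:(lia)).
    - exact (uniq_exp f _ _ 5 5 H Hexp 4 ltac:(lia) ltac:(lia)). }
  split; [|split; [|split; [|split]]].
  - exists (C1 g m n), (C2 g m n). unfold expansion_c1c2.
    apply (trunc f (cstar g m n) _ 5 5 Hexp); [lia|].
    intros i Hi. destruct i as [|[|[|[|[|[|i]]]]]]; reflexivity.
  - intros c1 c2 H. destruct (Hc c1 c2 H) as [-> ->]. split; auto.
  - intros Hn. exists (fun i => match i with 0%nat => 1 | 2%nat => C1 g m n | _ => 0 end).
    split; [reflexivity|split; [|split]].
    + intros i Hi. destruct i as [|[|i]]; [lia|reflexivity|lia].
    + simpl. intro Z. apply Hn, Hroots, Z.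
    + apply (trunc f (cstar g m n) _ 5 2 Hexp); [lia|].
      intros i Hi. destruct i as [|[|[|i]]]; try reflexivity. lia.
  - intros k Hk [c [H0 [Hz [Hne He]]]].
    apply Hnb. split.
    + pose proof (uniq_exp f _ _ _ _ He Hexp 2 ltac:(lia) ltac:(lia)) as U; simpl in U; rewrite <- U. apply Hz. lia.
    + pose proof (uniq_exp f _ _ _ _ He Hexp 4 ltac:(lia) ltac:(lia)) as U; simpl in U; rewrite <- U. apply Hz. lia.
  - split.
    + intros [c [H0 [Hz [Hne He]]]]. apply Hroots.
      pose proof (uniq_exp f _ _ _ _ He Hexp 2 ltac:(lia) ltac:(lia)) as U; simpl in U; rewrite <- U. apply Hz. lia.
    + intros Hr. apply Hroots in Hr.
      exists (fun i => match i with 0%nat => 1 | 4%nat => C2 g m n | _ => 0 end).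
      split; [reflexivity|split; [|split]].
      * intros i Hi. destruct i as [|[|[|[|i]]]]; try reflexivity; lia.
      * simpl. intro Z. apply Hnb. auto.
      * apply (trunc f (cstar g m n) _ 5 4 Hexp); [lia|].
        intros i Hi. destruct i as [|[|[|[|[|i]]]]]; try reflexivity; simpl; try lia. auto.
Qed.
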